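(* Let $H$ be a connected block graph with at least one edge, and define a vertex set $R\subseteq V(H)$ as follows. (1) If $H$ is a clique or a star, $R=V(H)$. (2) Otherwise, if $H$ has a leaf block $Q$ with $|V(Q)|\ge 3$, $R=V(Q)$. (3) Otherwise, $H$ is pointed; let $Q$ be a near-leaf block of $H$, and let $v$ be the anchor of $Q$ if it exists and otherwise any cut-vertex of $Q$. (3a) If $Q$ contains exactly two cut-vertices, let $u$ be the other one and $R=V(Q_u)$. (3b) Otherwise let $u,w$ be distinct cut-vertices in $V(Q)\setminus\{v\}$, and let $S^u,S^w$ be the sets of degree-one vertices adjacent to $u$, respectively $w$; set $R=V(Q_{u,w})\setminus\{v\}$ if $Q$ contains exactly three cut-vertices, and $R=S^u\cup S^w\cup\{u,w\}$ otherwise. Then $\operatorname{cobox}(H\setminus R)\le \operatorname{cobox}(H)-1$, where $H\setminus R$ is the subgraph induced on $V(H)\setminus R$.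
   Context: All graphs are finite and simple; big ants and neighbourhoods are taken in $H$. A block is a maximal connected subgraph with no cut-vertex of its own; a block graph is one whose blocks are all complete. A cut-vertex is a vertex whose removal increases the number of connected components. A block is a leaf block if it contains exactly one cut-vertex, an internal block if it contains at least two, and an edge block if it has exactly two vertices; two distinct blocks are neighbours if they share a vertex. A graph is pointed if all its leaf blocks are edge blocks. An internal block $Q$ is a near-leaf block if either all neighbours of $Q$ are leaf blocks, or all internal block neighbours of $Q$ share with $Q$ one and the same cut-vertex, called the anchor of $Q$. For a clique $Q$ and $u,v\in V(Q)$, the big ant is $Q_{u,v}=\big(V(Q)\cup N_H(u)\cup N_H(v),\ E(Q)\cup\delta_H(u)\cup\delta_H(v)\big)$, $Q_u=Q_{u,u}$, where $N_H(x)$ and $\delta_H(x)$ are the neighbourhood and incident edge set of $x$. The co-boxicity $\operatorname{cobox}(G)$ is the boxicity of the complement of $G$; equivalently, the minimum number of co-interval subgraphs of $G$ whose edge sets cover $E(G)$ (so it is $0$ for edgeless graphs), where a graph is co-interval if its vertices can be assigned closed real intervals such that two vertices are adjacent iff their intervals are disjoint. *)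

(* Defs.v *)
From Stdlib Require Import Rdefinitions ClassicalEpsilon.
From mathcomp Require Import all_boot.

Set Implicit Arguments.
Unset Strict Implicit.
Unset Printing Implicit Defensive.

Section GraphDefs.
Variable T : finType.
(* H is the simple graph with vertex set T and adjacency relation e
   (symmetric and irreflexive, assumed in the theorem). *)
Variable e : rel T.

Definition Nb (x : T) : {set T} := [set y | e x y].

Definition ind_rel (S : {set T}) : rel T := [rel a b | [&& e a b, a \in S & b \in S]].

Definition comp_of (S : {set T}) (x : T) : {set T} :=
  [set y in S | connect (ind_rel S) x y].

Definition ncomp (S : {set T}) : nat := #|[set comp_of S x | x in S]|.

Definition connected_set (S : {set T}) : Prop :=
  forall x y, x \in S -> y \in S -> connect (ind_rel S) x y.

Definition is_cut_vertex (x : T) : bool := ncomp [set: T] < ncomp [set~ x].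

Definition no_own_cut (S : {set T}) : Prop :=
  forall x, x \in S -> ncomp (S :\ x) <= ncomp S.

Definition biconn_set (S : {set T}) : Prop :=
  [/\ S != set0, connected_set S & no_own_cut S].

(* blocks, represented by their vertex sets (blocks are induced subgraphs) *)
Definition is_block (B : {set T}) : Prop :=
  biconn_set B /\ forall B' : {set T}, B \proper B' -> ~ biconn_set B'.

Definition is_clique_set (S : {set T}) : Prop :=
  forall u v, u \in S -> v \in S -> u != v -> e u v.

Definition block_graph : Prop := forall B, is_block B -> is_clique_set B.

Definition cut_in (B : {set T}) : {set T} := [set x in B | is_cut_vertex x].

Definition leaf_block (B : {set T}) : Prop := is_block B /\ #|cut_in B| = 1.
Definition internal_block (B : {set T}) : Prop := is_block B /\ 2 <= #|cut_in B|.
Definition edge_block (B : {set T}) : Prop := is_block B /\ #|B| = 2.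

Definition block_nbrs (B B' : {set T}) : Prop :=
  [/\ is_block B, is_block B', B != B' & ~~ [disjoint B & B']].

Definition pointed : Prop := forall B, leaf_block B -> edge_block B.

Definition is_anchor (Q : {set T}) (v : T) : Prop :=
  [/\ v \in cut_in Q,
      (exists Q', block_nbrs Q Q' /\ internal_block Q') &
      forall Q', block_nbrs Q Q' -> internal_block Q' -> Q :&: Q' = [set v]].

Definition near_leaf (Q : {set T}) : Prop :=
  internal_block Q /\
  ((forall Q', block_nbrs Q Q' -> leaf_block Q') \/ exists v, is_anchor Q v).

Definition bigant (Q : {set T}) (u v : T) : {set T} := Q :|: Nb u :|: Nb v.

Definition deg1_nbrs (u : T) : {set T} := [set y | e u y && (#|Nb y| == 1)].

Definition is_complete : Prop := forall u v : T, u != v -> e u v.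
Definition is_star : Prop :=
  exists c : T, forall u v : T, u != v -> e u v = (u == c) || (v == c).

Definition R_choice (Rs : {set T}) : Prop :=
  ((is_complete \/ is_star) /\ Rs = [set: T])
  \/ (~ (is_complete \/ is_star) /\
      exists Q, [/\ leaf_block Q, 3 <= #|Q| & Rs = Q])
  \/ (~ (is_complete \/ is_star) /\
      ~ (exists Q, leaf_block Q /\ 3 <= #|Q|) /\
      exists Q v,
        [/\ near_leaf Q,
            is_anchor Q v \/ ((~ exists a, is_anchor Q a) /\ v \in cut_in Q) &
            (#|cut_in Q| = 2 /\
               exists u, [/\ u \in cut_in Q, u != v & Rs = bigant Q u u])
            \/ (#|cut_in Q| <> 2 /\
               exists u w, [/\ u \in cut_in Q :\ v, w \in cut_in Q :\ v, u != w &
                 Rs = if #|cut_in Q| == 3 then bigant Q u w :\ v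
                      else deg1_nbrs u :|: deg1_nbrs w :|: [set u; w]])]).

Definition disjI (I J : R * R) : Prop := Rlt I.2 J.1 \/ Rlt J.2 I.1.

(* H[V] is covered by k co-interval (spanning) subgraphs: the i-th one
   assigns interval I i x to each vertex x, its edges are the pairs with
   disjoint intervals; these must be edges of H[V], and every edge of H[V]
   must be an edge of one of them. *)
Definition cobox_le (V : {set T}) (k : nat) : Prop :=
  exists I : 'I_k -> T -> R * R,
    [/\ forall i x, Rle (I i x).1 (I i x).2,
        forall i u v, u \in V -> v \in V -> u != v ->
                      disjI (I i u) (I i v) -> e u v &
        forall u v, u \in V -> v \in V -> e u v ->
                      exists i, disjI (I i u) (I i v)].

Definition cobox_pred (V : {set T}) : pred nat :=
  fun k => if excluded_middle_informative (cobox_le V k) then true else false.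

Lemma cobox_pred_ex (V : {set T}) :
  (exists k, cobox_le V k) -> exists k, cobox_pred V k.
Proof.
case=> k hk; exists k; rewrite /cobox_pred.
by case: (excluded_middle_informative (cobox_le V k)).
Qed.

Definition cobox (V : {set T}) : nat :=
  match excluded_middle_informative (exists k, cobox_le V k) with
  | left h => ex_minn (cobox_pred_ex h)
  | right _ => 0
  end.

End GraphDefs.

(* Main.v *)
From Stdlib Require Import Reals Lra Classical ClassicalEpsilon.
Require Import Defs.
From mathcomp Require Import all_boot.

Set Implicit Arguments.
Unset Strict Implicit.
Unset Printing Implicit Defensive.

Lemma no_2K2 (a b c d : R * R) :
  Rle a.1 a.2 -> Rle b.1 b.2 -> Rle c.1 c.2 -> Rle d.1 d.2 ->
  disjI a b -> disjI c d -> ~ disjI a c -> ~ disjI a d -> ~ disjI b c -> ~ disjI b d -> False.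
Proof.
rewrite /disjI => ha hb hc hd h1 h2 n1 n2 n3 n4.
apply: n1; apply: Classical_Prop.NNPP => n1.
apply: n2; apply: Classical_Prop.NNPP => n2.
apply: n3; apply: Classical_Prop.NNPP => n3.
apply: n4; apply: Classical_Prop.NNPP => n4.
apply Classical_Prop.not_or_and in n1, n2, n3, n4.
case: n1 n2 n3 n4 => n1 n1' [n2 n2'] [n3 n3'] [n4 n4'].
case: h1 => h1; case: h2 => h2; lra.
Qed.

Definition flipI (p : R * R) : R * R := (Ropp p.2, Ropp p.1).

Lemma disjI_flip p q : disjI (flipI p) (flipI q) <-> disjI p q.
Proof. rewrite /disjI /flipI /=; split; case=> h; [right|left|right|left]; lra. Qed.

Lemma disjI_sym p q : disjI p q -> disjI q p.
Proof. by rewrite /disjI; case=> h; [right|left]. Qed.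

Section Cover.
Variable T : finType.
Variable e : rel T.
Hypothesis esym : symmetric e.
Hypothesis eirr : irreflexive e.

Definition valid (J : T -> R * R) := forall x, Rle (J x).1 (J x).2.
Definition sound (V : {set T}) (J : T -> R * R) :=
  forall a b, a \in V -> b \in V -> a != b -> disjI (J a) (J b) -> e a b.

Lemma cobox_min V k : cobox_le e V k -> cobox e V <= k.
Proof.
move=> h; rewrite /cobox; case: excluded_middle_informative => [ex|nex].
  case: ex_minnP => m _ hmin; apply: hmin.
  by rewrite /cobox_pred; case: excluded_middle_informative.
by exfalso; apply: nex; exists k.
Qed.

Lemma cobox_spec V : (exists k, cobox_le e V k) -> cobox_le e V (cobox e V).
Proof.
move=> ex; rewrite /cobox; case: excluded_middle_informative => [ex'|nex] //.
case: ex_minnP => m hm _; move: hm; rewrite /cobox_pred.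
by case: excluded_middle_informative.
Qed.

Lemma cobox_ex V : exists k, cobox_le e V k.
Proof.
pose I (i : 'I_#|{: T * T}|) (x : T) : R * R :=
  let p := enum_val i in
  if e p.1 p.2 then (if x == p.1 then (R0, R0) else if x == p.2 then (R1, R1) else (R0, R1))
  else (R0, R1).
exists #|{: T * T}|, I; split.
- move=> i x; rewrite /I; case: ifP => _; [case: ifP => _; [|case: ifP => _]|]; simpl; lra.
- move=> i u v _ _ nuv; rewrite /I; case: (enum_val i) => p1 p2 /=.
  case: ifP => hp //; last by rewrite /disjI /=; lra.
  have np : p1 != p2 by apply: contraTneq hp => ->; rewrite eirr.
  move: nuv.
  case: (eqVneq u p1) => [?|nu1]; case: (eqVneq v p1) => [?|nv1];
  case: (eqVneq u p2) => [?|nu2]; case: (eqVneq v p2) => [?|nv2]; subst => //= _ h;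
  first [ by rewrite esym | by [] | (exfalso; case: h => /= ?; lra) ].
- move=> u v _ _ huv; exists (enum_rank (u, v)); rewrite /I enum_rankK /= huv eqxx.
  have nuv : v != u by apply: contraTneq huv => ->; rewrite eirr.
  rewrite (negbTE nuv) eqxx /disjI /=; lra.
Qed.

Lemma cobox_le_set0 k : cobox_le e set0 k.
Proof.
exists (fun _ _ => (R0, R0)); split.
- move=> _ _ /=; lra.
- by move=> ? u v; rewrite inE.
- by move=> u v; rewrite inE.
Qed.


Lemma drop_coord V k (I : 'I_k.+1 -> T -> R * R) i :
  (forall j, valid (I j)) -> (forall j, sound V (I j)) ->
  (forall u v, u \in V -> v \in V -> e u v -> exists j, disjI (I j u) (I j v)) ->
  (forall a b, a \in V -> b \in V -> e a b -> ~ disjI (I i a) (I i b)) ->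
  cobox_le e V k.
Proof.
move=> hv hs hc hi; exists (fun n => I (lift i n)); split.
- by move=> n; apply: hv.
- by move=> n; apply: hs.
- move=> u v hu hv' huv; case: (hc u v hu hv' huv) => j hj.
  case: (unliftP i j) => [n jn|ji]; first by exists n; rewrite -jn.
  by exfalso; apply: (hi u v hu hv' huv); rewrite -ji.
Qed.

Lemma merge_coord V k (I : 'I_k.+1 -> T -> R * R) i m (F : T -> R * R) :
  (forall j, valid (I j)) -> (forall j, sound V (I j)) ->
  (forall u v, u \in V -> v \in V -> e u v -> exists j, disjI (I j u) (I j v)) ->
  i != m -> valid F -> sound V F ->
  (forall a b, a \in V -> b \in V -> e a b ->
     disjI (I i a) (I i b) \/ disjI (I m a) (I m b) -> disjI (F a) (F b)) ->
  cobox_le e V k.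
Proof.
move=> hv hs hc nim hF sF cF.
exists (fun n => if lift i n == m then F else I (lift i n)); split.
- by move=> n; case: ifP => _; [apply: hF|apply: hv].
- by move=> n; case: ifP => _; [apply: sF|apply: hs].
- move=> u v hu hv' huv; case: (hc u v hu hv' huv) => j hj.
  have [n hn] : exists n, lift i n = m.
    by case: (unliftP i m) => [n ->|mi]; [exists n|rewrite mi eqxx in nim].
  case: (unliftP i j) => [n' jn|ji].
    exists n'; case: ifP => [/eqP hm|_]; last by rewrite -jn.
    by apply: cF => //; right; rewrite -hm -jn.
  exists n; rewrite hn eqxx; apply: cF => //; left; by rewrite -ji.
Qed.

End Cover.


Set Implicit Arguments.
Unset Strict Implicit.
Unset Printing Implicit Defensive.

Lemma notdisj (p q : R * R) : ~ disjI p q -> Rle q.1 p.2 /\ Rle p.1 q.2.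
Proof.
rewrite /disjI => h; split; apply: Rnot_lt_le => h'; apply: h; by [left|right].
Qed.

Section Orient.
Variable T : finType.
Variable e : rel T.
Hypothesis esym : symmetric e.
Hypothesis eirr : irreflexive e.

Definition validJ (J : T -> R * R) := forall x, Rle (J x).1 (J x).2.
Definition soundT (J : T -> R * R) := forall a b, a != b -> disjI (J a) (J b) -> e a b.
Definition flipJ (J : T -> R * R) := fun x => flipI (J x).

Lemma validJ_flip J : validJ J -> validJ (flipJ J).
Proof. by move=> h x; rewrite /flipJ /flipI /=; have := h x; lra. Qed.

Lemma soundT_flip J : soundT J -> soundT (flipJ J).
Proof. by move=> h a b nab /disjI_flip; apply: h. Qed.

Lemma meets J a b : soundT J -> a != b -> ~~ e a b -> ~ disjI (J a) (J b).
Proof. by move=> hs nab nab' /(hs _ _ nab); apply/negP. Qed.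

Lemma orient J c l : disjI (J c) (J l) ->
  Rlt (J c).2 (J l).1 \/ Rlt (flipJ J c).2 (flipJ J l).1.
Proof. rewrite /flipJ /flipI /=; case=> h; [left|right]; lra. Qed.

Lemma nleaf J c l x : soundT J -> (forall y, e l y -> y = c) -> x != l -> x != c ->
  ~ disjI (J l) (J x).
Proof.
move=> hs hl nxl nxc; apply: meets => //; first by rewrite eq_sym.
by apply: contra nxc => /hl ->.
Qed.

Lemma LS J c l a b : validJ J -> soundT J ->
  (forall x, e l x -> x = c) -> disjI (J c) (J l) ->
  a != b -> a != c -> b != c -> disjI (J a) (J b) -> e c a || e c b.
Proof.
move=> hv hs hl hcl nab nac nbc hab.
case: (boolP (e c a)) => //= nca; apply: contraT => ncb.
have nal : a != l.
  apply: contraNneq nbc => al; rewrite al in hab; apply/eqP; apply: hl.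
  by apply: hs hab; rewrite -al.
have nbl : b != l.
  apply: contraNneq nac => bl; rewrite bl in hab; apply/eqP; apply: hl.
  by rewrite esym; apply: hs hab; rewrite -bl.
exfalso; apply: (@no_2K2 (J c) (J l) (J a) (J b)); try exact: hv; try done.
- by apply: meets => //; rewrite eq_sym.
- by apply: meets => //; rewrite eq_sym.
- exact: (nleaf hs hl nal nac).
- exact: (nleaf hs hl nbl nbc).
Qed.

Lemma LO_core J c l a1 b1 a2 b2 : validJ J -> soundT J ->
  (forall x, e l x -> x = c) -> Rlt (J c).2 (J l).1 ->
  a1 != c -> b1 != c -> a2 != c -> b2 != c -> a1 != b1 -> a2 != b2 ->
  disjI (J a1) (J b1) -> disjI (J a2) (J b2) -> ~~ e c a1 -> ~~ e c a2 ->
  a1 != b2 -> a2 != b1 -> ~~ e a1 b2 -> ~~ e a2 b1 -> False.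
Proof.
move=> hv hs hl hcl na1 nb1 na2 nb2 n1 n2 h1 h2 nc1 nc2 m1 m2 m1' m2'.
have nl : forall a b, a != c -> b != c -> a != b -> disjI (J a) (J b) -> a != l /\ b != l.
  move=> a b nac nbc nab hab; split.
    apply: contraNneq nbc => al; apply/eqP; apply: hl; rewrite -al; exact: hs hab.
  apply: contraNneq nac => bl; apply/eqP; apply: hl; rewrite -bl esym.
  exact: hs hab.
case: (nl _ _ na1 nb1 n1 h1) => l1 l1'.
case: (nl _ _ na2 nb2 n2 h2) => l2 l2'.
have := notdisj (nleaf hs hl l1 na1); have := notdisj (nleaf hs hl l1' nb1).
have := notdisj (nleaf hs hl l2 na2); have := notdisj (nleaf hs hl l2' nb2).
rewrite eq_sym in na1; rewrite eq_sym in na2.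
have := notdisj (meets hs na1 nc1); have := notdisj (meets hs na2 nc2).
have := notdisj (meets hs m1 m1'); have := notdisj (meets hs m2 m2').
have := hv a1; have := hv a2; have := hv b1; have := hv b2; have := hv c; have := hv l.
case: h1 => h1; case: h2 => h2 /=; lra.
Qed.

Lemma LO J c l a1 b1 a2 b2 : validJ J -> soundT J ->
  (forall x, e l x -> x = c) -> disjI (J c) (J l) ->
  a1 != c -> b1 != c -> a2 != c -> b2 != c -> a1 != b1 -> a2 != b2 ->
  disjI (J a1) (J b1) -> disjI (J a2) (J b2) -> ~~ e c a1 -> ~~ e c a2 ->
  a1 != b2 -> a2 != b1 -> ~~ e a1 b2 -> ~~ e a2 b1 -> False.
Proof.
move=> hv hs hl /orient [] hcl na1 nb1 na2 nb2 n1 n2 h1 h2.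
  exact: (LO_core hv hs hl hcl).
apply: (LO_core (validJ_flip hv) (soundT_flip hs) hl hcl) => //; exact/disjI_flip.
Qed.

Lemma LR2A_core J c1 l1 c2 l2 a b : validJ J -> soundT J ->
  (forall x, e l1 x -> x = c1) -> (forall x, e l2 x -> x = c2) -> c1 != c2 ->
  Rlt (J c1).2 (J l1).1 -> disjI (J c2) (J l2) -> l2 != c1 -> c2 != l1 ->
  a != c1 -> a != l1 -> a != c2 -> a != l2 ->
  b != c1 -> b != l1 -> b != c2 -> b != l2 -> a != b ->
  disjI (J a) (J b) -> (e c1 b && e c2 a) || (e c1 a && e c2 b).
Proof.
move=> hv hs hl1 hl2 n12 h1 h2 nl2c1 nc2l1 a1 a2 a3 a4 b1 b2 b3 b4 nab hab.
have nl2c1' : ~~ e l2 c1 by apply: contra n12 => /hl2 ->.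
have mc1 := notdisj (meets hs nl2c1 nl2c1').
have n21 : c2 != c1 by rewrite eq_sym.
have c2l1 := notdisj (nleaf hs hl1 nc2l1 n21).
have la := notdisj (nleaf hs hl1 a2 a1); have lb := notdisj (nleaf hs hl1 b2 b1).
have ka := notdisj (nleaf hs hl2 a4 a3); have kb := notdisj (nleaf hs hl2 b4 b3).
have := hv c1; have := hv c2; have := hv l1; have := hv l2; have := hv a; have := hv b.
move=> va vb vl2 vl1 vc2 vc1.
case: mc1 c2l1 la lb ka kb => /= ? ? [? ?] [? ?] [? ?] [? ?] [? ?].
have o2 : Rlt (J l2).2 (J c2).1 by case: h2 => h2 //; exfalso; lra.
case: hab => hab.
- apply/orP; left; apply/andP; split.
    by apply: hs; [rewrite eq_sym|left; lra].
  by rewrite esym; apply: hs => //; left; lra.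
- apply/orP; right; apply/andP; split.
    by apply: hs; [rewrite eq_sym|left; lra].
  by rewrite esym; apply: hs => //; left; lra.
Qed.

Lemma LR2B_core J c1 l1 c2 l2 z lz : validJ J -> soundT J ->
  (forall x, e l1 x -> x = c1) -> (forall x, e l2 x -> x = c2) -> c1 != c2 ->
  Rlt (J c1).2 (J l1).1 -> disjI (J c2) (J l2) -> l2 != c1 -> c2 != l1 ->
  z != c1 -> z != l1 -> z != c2 -> z != l2 ->
  lz != c1 -> lz != c2 -> ~~ e lz c1 -> ~~ e lz c2 -> ~ disjI (J z) (J lz).
Proof.
move=> hv hs hl1 hl2 n12 h1 h2 nl2c1 nc2l1 a1 a2 a3 a4 b1 b3 e1 e3.
have nl2c1' : ~~ e l2 c1 by apply: contra n12 => /hl2 ->.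
have mc1 := notdisj (meets hs nl2c1 nl2c1').
have n21 : c2 != c1 by rewrite eq_sym.
have c2l1 := notdisj (nleaf hs hl1 nc2l1 n21).
have la := notdisj (nleaf hs hl1 a2 a1).
have ka := notdisj (nleaf hs hl2 a4 a3).
have m1 := notdisj (meets hs b1 e1); have m2 := notdisj (meets hs b3 e3).
have := hv c1; have := hv c2; have := hv l1; have := hv l2; have := hv z; have := hv lz.
move=> va vb vl2 vl1 vc2 vc1.
case: mc1 c2l1 la ka m1 m2 => /= ? ? [? ?] [? ?] [? ?] [? ?] [? ?].
have o2 : Rlt (J l2).2 (J c2).1 by case: h2 => h2 //; exfalso; lra.
rewrite /disjI; case=> ?; lra.
Qed.

Lemma LR2A J c1 l1 c2 l2 a b : validJ J -> soundT J ->
  (forall x, e l1 x -> x = c1) -> (forall x, e l2 x -> x = c2) -> c1 != c2 ->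
  disjI (J c1) (J l1) -> disjI (J c2) (J l2) -> l2 != c1 -> c2 != l1 ->
  a != c1 -> a != l1 -> a != c2 -> a != l2 ->
  b != c1 -> b != l1 -> b != c2 -> b != l2 -> a != b ->
  disjI (J a) (J b) -> (e c1 b && e c2 a) || (e c1 a && e c2 b).
Proof.
move=> hv hs hl1 hl2 n12 /orient [] h1 h2 n1 n2.
  exact: (LR2A_core hv hs hl1 hl2 n12 h1 h2 n1 n2).
have h2' : disjI (flipJ J c2) (flipJ J l2) by apply/disjI_flip.
move=> ? ? ? ? ? ? ? ? ? /disjI_flip hab.
exact: (LR2A_core (validJ_flip hv) (soundT_flip hs) hl1 hl2 n12 h1 h2' n1 n2).
Qed.

Lemma LR2B J c1 l1 c2 l2 z lz : validJ J -> soundT J ->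
  (forall x, e l1 x -> x = c1) -> (forall x, e l2 x -> x = c2) -> c1 != c2 ->
  disjI (J c1) (J l1) -> disjI (J c2) (J l2) -> l2 != c1 -> c2 != l1 ->
  z != c1 -> z != l1 -> z != c2 -> z != l2 ->
  lz != c1 -> lz != c2 -> ~~ e lz c1 -> ~~ e lz c2 -> ~ disjI (J z) (J lz).
Proof.
move=> hv hs hl1 hl2 n12 /orient [] h1 h2 n1 n2.
  exact: (LR2B_core hv hs hl1 hl2 n12 h1 h2 n1 n2).
have h2' : disjI (flipJ J c2) (flipJ J l2) by apply/disjI_flip.
move=> ? ? ? ? ? ? ? ? /disjI_flip.
exact: (LR2B_core (validJ_flip hv) (soundT_flip hs) hl1 hl2 n12 h1 h2' n1 n2).
Qed.
End Orient.


Set Implicit Arguments.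
Unset Strict Implicit.
Unset Printing Implicit Defensive.

Section Fcoord.
Variable T : finType.
Variable e : rel T.
Hypothesis esym : symmetric e.
Hypothesis eirr : irreflexive e.
Local Open Scope R_scope.

Lemma Fcoord (V K : {set T}) (xa xb : T) :
  (forall x y, x \in K -> y \in K -> x != y -> e x y) -> xa \in K -> xb \in K ->
  (forall x, x \in V -> x \notin K -> e x xa -> e x xb -> xa = xb) ->
  exists F : T -> R * R, [/\ validJ F, sound e V F &
    forall a b, a \in V -> b \in V -> e a b ->
      (a \in K /\ b \in K) \/ a = xa \/ b = xa \/ a = xb \/ b = xb ->
      disjI (F a) (F b)].
Proof.
move=> hK ha hb hnc.
pose M := (INR #|T| + 2).
pose p (x : T) := (INR (enum_rank x) + 1).
have pb : forall x, Rle 1 (p x) /\ Rle (p x) (M - 2).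
  move=> x; rewrite /p /M; have h := ltn_ord (enum_rank x).
  have h1 := pos_INR (enum_rank x).
  have h2 : INR (enum_rank x).+1 <= INR #|T| by apply: le_INR; apply/leP.
  rewrite S_INR in h2.
  split; lra.
have pinj : forall x y, x != y -> p x <> p y.
  move=> x y nxy; rewrite /p => h; have : INR (enum_rank x) = INR (enum_rank y) by lra.
  move/INR_eq => /val_inj /enum_rank_inj hxy; by rewrite hxy eqxx in nxy.
pose F (x : T) : R * R :=
  if x == xa then (R0, R0) else if x == xb then (M, M)
  else if x \in K then (p x, p x) else if e x xa then (R1, M)
  else if e x xb then (R0, (M - 1)) else (R0, M).
have hM : 2 <= M by rewrite /M; have := pos_INR #|T|; lra.
have FnK : forall b, b \notin K -> F b = if e b xa then (R1, M) else if e b xb then (R0, (M - 1)) else (R0, M).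
  move=> b bK; rewrite /F ifN; last by apply: contraNneq bK => ->.
  by rewrite ifN ?(negbTE bK) //; apply: contraNneq bK => ->.
pose q (a : T) := if a == xa then R0 else if a == xb then M else p a.
have FK : forall a, a \in K -> F a = (q a, q a).
  by move=> a aK; rewrite /F /q; case: ifP => //; case: ifP => //; rewrite aK.
have mixS : forall a b, a \in K -> b \notin K -> disjI (F a) (F b) -> e a b.
  move=> a b aK bK; rewrite FK // FnK // /q.
  case: (eqVneq a xa) => [->|na1].
    case: ifP => h1; first by rewrite esym.
    case: ifP => h2; rewrite /disjI /=; lra.
  case: (eqVneq a xb) => [->|na2].
    case: ifP => h1; first by rewrite /disjI /=; lra.
    case: ifP => h2; first by rewrite esym.
    rewrite /disjI /=; lra.
  have := pb a; case: ifP => h1; [|case: ifP => h2]; rewrite /disjI /=; lra.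
exists F; split.
- move=> x; rewrite /F; have := pb x.
  case: ifP => _; [|case: ifP => _; [|case: ifP => _; [|case: ifP => _; [|case: ifP => _]]]] => /=; lra.
- move=> a b aV bV nab.
  case: (boolP (a \in K)) => aK; case: (boolP (b \in K)) => bK.
  + by move=> _; apply: hK.
  + exact: mixS.
  + by move/disjI_sym => /mixS h; rewrite esym; apply: h.
  + rewrite (FnK a aK) (FnK b bK).
    case: ifP => _; [|case: ifP => _]; (case: ifP => _; [|case: ifP => _]); rewrite /disjI /=; lra.
- move=> a b aV bV hab hcase.
  have nab : a != b by apply: contraTneq hab => ->; rewrite eirr.
  have key : forall x y, x \in V -> y \in V -> e x y -> x != y -> x \in K ->
      y \in K \/ x = xa \/ x = xb -> disjI (F x) (F y).
    move=> x y xV yV hxy nxy xK hc.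
    case: (boolP (y \in K)) => yK.
      rewrite !FK // /q /disjI /=.
      case: (eqVneq x xa) => [ea|na1]; case: (eqVneq y xa) => [eb|nb1].
      * by rewrite ea eb eqxx in nxy.
      * case: ifP => _; [|have := pb y]; lra.
      * case: ifP => _; [|have := pb x]; lra.
      * case: (eqVneq x xb) => [ea|na2]; case: (eqVneq y xb) => [eb|nb2].
        -- by rewrite ea eb eqxx in nxy.
        -- have := pb y; lra.
        -- have := pb x; lra.
        -- case: (Rtotal_order (p x) (p y)) => [h|[h|h]]; [left|exfalso; exact: (pinj _ _ nxy h)|right]; lra.
    case: hc => [|hc]; first by move=> h; rewrite h in yK.
    rewrite FK // FnK // /q.
    case: (eqVneq x xa) => [ea|na1].
      by rewrite -ea esym hxy /disjI /=; left; lra.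
    case: hc => [ea|ea]; first by rewrite ea eqxx in na1.
    rewrite ea eqxx.
    case: ifP => h1.
      have := hnc y yV yK h1; rewrite -ea esym hxy => /(_ isT) h.
      by rewrite h ea eqxx in na1.
    by rewrite -ea esym hxy /disjI /=; right; lra.
  have nba : b != a by rewrite eq_sym.
  have hba : e b a by rewrite esym.
  case: hcase => [[aK bK]|[ea|[eb|[ea|eb]]]].
  + by apply: key => //; left.
  + by apply: (key a b) => //; [rewrite ea|right; left].
  + by apply/disjI_sym; apply: (key b a) => //; [rewrite eb|right; left].
  + by apply: (key a b) => //; [rewrite ea|right; right].
  + by apply/disjI_sym; apply: (key b a) => //; [rewrite eb|right; right].
Qed.
End Fcoord.


Set Implicit Arguments.
Unset Strict Implicit.
Unset Printing Implicit Defensive.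

Section Graph.
Variable T : finType.
Variable e : rel T.
Hypothesis esym : symmetric e.
Hypothesis eirr : irreflexive e.

Local Notation ir := (ind_rel e).
Local Notation conn S := (connected_set e S).

Lemma ir_sym (S : {set T}) : symmetric (ir S).
Proof. by move=> a b; rewrite /ind_rel /= esym; case: (a \in S); case: (b \in S); rewrite ?andbT ?andbF. Qed.

Lemma cs (S : {set T}) : connect_sym (ir S).
Proof. exact: sym_connect_sym (ir_sym S). Qed.

Lemma conn_mono (S S' : {set T}) x y : S \subset S' -> connect (ir S) x y -> connect (ir S') x y.
Proof.
move=> sub; apply: connect_sub => a b /= /and3P [hab ha hb]; apply: connect1.
by rewrite /ind_rel /= hab (subsetP sub _ ha) (subsetP sub _ hb).
Qed.

Lemma ncomp_le1 (S : {set T}) : conn S -> ncomp e S <= 1.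
Proof.
move=> hc; rewrite /ncomp.
case: (set_0Vmem S) => [->|[x0 hx0]]; first by rewrite imset0 cards0.
rewrite -(cards1 (comp_of e S x0)); apply: subset_leq_card.
apply/subsetP => C /imsetP [x hx ->]; rewrite inE; apply/eqP/setP => z.
rewrite !inE; case: (boolP (z \in S)) => //= hz.
apply/idP/idP => h; apply: connect_trans h.
  by rewrite cs; apply: hc.
by apply: hc.
Qed.

Lemma le1_conn (S : {set T}) : ncomp e S <= 1 -> conn S.
Proof.
move=> h x y hx hy; apply: contraT => nxy.
have hne : comp_of e S x != comp_of e S y.
  apply/eqP => /setP /(_ y); rewrite !inE hy connect0 /= => h'.
  by rewrite h' in nxy.
suff : 1 < ncomp e S by rewrite ltnNge h.
have <- : #|[set comp_of e S x; comp_of e S y]| = 2 by rewrite cards2 hne.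
rewrite /ncomp; apply: subset_leq_card; apply/subsetP => C.
by rewrite !inE => /orP [] /eqP ->; apply: imset_f.
Qed.

Lemma ncomp_gt0 (S : {set T}) x : x \in S -> 0 < ncomp e S.
Proof. by move=> hx; rewrite /ncomp card_gt0; apply/set0Pn; exists (comp_of e S x); apply: imset_f. Qed.

Lemma cut_notconn x : conn [set: T] -> is_cut_vertex e x -> ~ conn [set~ x].
Proof.
move=> hT; rewrite /is_cut_vertex => hlt hc.
have := ncomp_le1 hc; have := ncomp_gt0 (in_setT x).
by move: hlt; case: (ncomp e [set: T]) => // n; case: (ncomp e [set~ x]) => // [[|m]].
Qed.

Lemma noncut_conn x : conn [set: T] -> ~~ is_cut_vertex e x -> conn [set~ x].
Proof.
move=> hT; rewrite /is_cut_vertex -leqNgt => h; apply: le1_conn.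
by apply: leq_trans h (ncomp_le1 hT).
Qed.

Lemma biconnP (S : {set T}) : biconn_set e S <->
  [/\ S != set0, conn S & forall x, x \in S -> conn (S :\ x)].
Proof.
split.
  case=> hne hc hno; split => // x hx; apply: le1_conn.
  by apply: leq_trans (hno x hx) (ncomp_le1 hc).
case=> hne hc hx; split => // x xS; apply: leq_trans (ncomp_le1 (hx x xS)) _.
by apply: ncomp_gt0 xS.
Qed.

Lemma clique_biconn (S : {set T}) : S != set0 -> (forall x y, x \in S -> y \in S -> x != y -> e x y) ->
  biconn_set e S.
Proof.
move=> hne hcl; apply/biconnP; split => //.
  move=> x y hx hy; case: (eqVneq x y) => [->|nxy]; first exact: connect0.
  by apply: connect1; rewrite /ind_rel /= hx hy !andbT; apply: hcl.
move=> z _ x y hx hy; case: (eqVneq x y) => [->|nxy]; first exact: connect0.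
apply: connect1; rewrite /ind_rel /= hx hy !andbT.
by move: hx hy; rewrite !inE => /andP [_ hx] /andP [_ hy]; apply: hcl.
Qed.

Lemma conn_union (A B : {set T}) c : conn A -> conn B -> c \in A -> c \in B -> conn (A :|: B).
Proof.
move=> hA hB cA cB.
have toc : forall x, x \in A :|: B -> connect (ir (A :|: B)) x c.
  move=> x; rewrite inE => /orP [] hx.
    by apply: (@conn_mono A); [apply: subsetUl|apply: hA].
  by apply: (@conn_mono B); [apply: subsetUr|apply: hB].
move=> x y hx hy; apply: connect_trans (toc x hx) _; rewrite cs; exact: toc.
Qed.

Lemma union_biconn (S1 S2 : {set T}) a b : biconn_set e S1 -> biconn_set e S2 -> a != b ->
  a \in S1 -> a \in S2 -> b \in S1 -> b \in S2 -> biconn_set e (S1 :|: S2).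
Proof.
move=> /biconnP [ne1 c1 h1] /biconnP [ne2 c2 h2] nab a1 a2 b1 b2.
apply/biconnP; split.
- by apply/set0Pn; exists a; rewrite inE a1.
- exact: conn_union c1 c2 a1 a2.
- move=> z _; rewrite setDUl.
  have k1 : conn (S1 :\ z) by case: (boolP (z \in S1)) => hz; [apply: h1|rewrite (setDidPl _) // disjoint_sym disjoints1].
  have k2 : conn (S2 :\ z) by case: (boolP (z \in S2)) => hz; [apply: h2|rewrite (setDidPl _) // disjoint_sym disjoints1].
  case: (eqVneq z a) => [za|nza].
    have nzb : b != z by rewrite za eq_sym.
    by apply: (conn_union (c:=b) k1 k2); rewrite !inE ?nzb ?b1 ?b2.
  have nza' : a != z by rewrite eq_sym.
  by apply: (conn_union (c:=a) k1 k2); rewrite !inE ?nza' ?a1 ?a2.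
Qed.

Lemma block_ext (S : {set T}) : biconn_set e S -> exists B, is_block e B /\ S \subset B.
Proof.
move: {2}#|~: S| (leqnn #|~: S|) => n; elim: n S => [|n IH] S hn hS.
  exists S; split => //; split => // B' /properP [_ [x _ xS]].
  by move: hn; rewrite leqn0 cards_eq0 => /eqP /setP /(_ x); rewrite !inE xS.
case: (classic (is_block e S)) => hb; first by exists S.
have [B' [pB' bB']] : exists B' : {set T}, S \proper B' /\ biconn_set e B'.
  apply: NNPP => hn'; apply: hb; split => // B' hp hb'; apply: hn'; by exists B'.
have : #|~: B'| <= n.
  rewrite -ltnS; apply: leq_trans hn; apply: proper_card; by rewrite properC.
case/(IH B')/(_ bB') => B [hB sB]; exists B; split => //.
by apply: subset_trans sB; apply: proper_sub.
Qed.

Lemma block_absorb (B S : {set T}) a b : is_block e B -> biconn_set e S -> a != b ->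
  a \in S -> b \in S -> a \in B -> b \in B -> S \subset B.
Proof.
move=> [bB hmax] bS nab aS bS' aB bB'.
have hU := union_biconn bB bS nab aB aS bB' bS'.
apply: contraT => nsub; exfalso; apply: (hmax (B :|: S)) => //.
rewrite properEneq subsetUl andbT; apply: contraNneq nsub => hE.
by rewrite hE subsetUr.
Qed.

Lemma two_nbrs (Q : {set T}) x a b : block_graph e -> is_block e Q -> a != b ->
  a \in Q -> b \in Q -> e x a -> e x b -> x \in Q.
Proof.
move=> bg bQ nab aQ bQ' xa xb.
have hcl : forall y z, y \in [set x; a; b] -> z \in [set x; a; b] -> y != z -> e y z.
  have eab : e a b by apply: (bg Q bQ).
  move=> y z; rewrite !inE => hy hz.
  case/orP: hy => [/orP [] |] /eqP ->; case/orP: hz => [/orP [] |] /eqP ->;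
  rewrite ?eqxx // => _; by rewrite // esym.
have ne : [set x; a; b] != set0 by apply/set0Pn; exists x; rewrite !inE eqxx.
have bT := clique_biconn ne hcl.
have := block_absorb bQ bT nab _ _ aQ bQ'.
have i1 : a \in [set x; a; b] by rewrite !inE eqxx !orbT.
have i2 : b \in [set x; a; b] by rewrite !inE eqxx !orbT.
by move=> /(_ i1 i2) /subsetP; apply; rewrite !inE eqxx.
Qed.

Lemma path_ir_all (A : {set T}) h s : path (ir A) h s -> h \in A -> all (mem A) s.
Proof.
elim: s h => //= y s IH h /andP [/and3P [_ _ hy] hp] _.
by rewrite hy (IH y hp hy).
Qed.

Lemma path_ir_e (A : {set T}) h s : path (ir A) h s -> path e h s.
Proof. by apply: sub_path => a b /and3P []. Qed.

Lemma path_conn (A : {set T}) s h : path e h s -> {subset h :: s <= A} ->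
  forall c, c \in h :: s -> connect (ir A) h c.
Proof.
elim: s h => [|y s IH] h /=.
  by move=> _ _ c; rewrite inE => /eqP ->; apply: connect0.
move=> /andP [hy hp] sub c; rewrite inE => /orP [/eqP ->|hc]; first exact: connect0.
apply: connect_trans (IH y hp _ c hc).
  apply: connect1; rewrite /ind_rel /= hy !sub //; by rewrite !inE eqxx ?orbT.
by move=> z hz; apply: sub; rewrite inE hz orbT.
Qed.

Lemma cycle_biconn (c : seq T) : c != [::] -> uniq c -> cycle e c -> biconn_set e [set x in c].
Proof.
move=> cne cu cc.
have key : forall h s, path e h s -> conn [set x in h :: s].
  move=> h s hp x y hx hy.
  have sub : {subset h :: s <= [set x in h :: s]} by move=> z hz; rewrite inE.
  rewrite inE in hx; rewrite inE in hy.
  apply: (@connect_trans _ _ h); last exact: path_conn hp sub _ hy.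
  by rewrite cs; exact: path_conn hp sub _ hx.
apply/biconnP; split.
- by case: c cne {cu cc} => // h s _; apply/set0Pn; exists h; rewrite inE mem_head.
- case: c cne cu cc => // h s _ _ /=; rewrite rcons_path => /andP [hp _].
  exact: key.
- move=> z; rewrite inE => zc; case/rot_to: zc => i s' hrot.
  have cu' : uniq (z :: s') by rewrite -hrot rot_uniq.
  have cc' : cycle e (z :: s') by rewrite -hrot rot_cycle.
  have -> : [set x in c] :\ z = [set x in s'].
    apply/setP => w; rewrite !inE -(mem_rot i) hrot inE.
    case: (eqVneq w z) => [->|//]; move: cu' => /= /andP [hz _].
    by rewrite (negbTE hz).
  case: s' {hrot} cu' cc' => [|h t] _.
    by move=> _ x y; rewrite inE.
  rewrite /= rcons_path => /andP [_ /andP [hp _]]; exact: key.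
Qed.

Lemma nb_path u p a : path e a p -> last a p = u -> a != u ->
  exists n, e n u /\ connect (ir [set~ u]) a n.
Proof.
elim: p a => [|y p IH] a /=; first by move=> _ -> ; rewrite eqxx.
move=> /andP [hay hp] hl nau.
case: (eqVneq y u) => [yu|nyu].
  by exists a; split; [rewrite -yu|apply: connect0].
case: (IH y hp hl nyu) => n [hn hc]; exists n; split => //.
apply: connect_trans hc; apply: connect1.
by rewrite /ind_rel /= hay !inE nau nyu.
Qed.

Lemma cut_outside (Q : {set T}) u : conn [set: T] ->
  (forall x y, x \in Q -> y \in Q -> x != y -> e x y) ->
  u \in Q -> is_cut_vertex e u -> exists y, e u y /\ y \notin Q.
Proof.
move=> hT hQ uQ hcut; apply: NNPP => hno; apply: (cut_notconn hT hcut).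
have nbQ : forall y, e u y -> y \in Q.
  move=> y hy; apply: NNPP => hyQ; apply: hno; exists y; split => //; exact/negP.
have toN : forall a, a \in [set~ u] -> exists n, [/\ n \in Q, n != u & connect (ir [set~ u]) a n].
  move=> a; rewrite !inE => nau.
  case/connectP: (hT a u (in_setT a) (in_setT u)) => p hp hl.
  case: (nb_path (path_ir_e hp) (sym_eq hl) nau) => n [hn hc].
  exists n; split => //; first by apply: nbQ; rewrite esym.
  by apply: contraTneq hn => ->; rewrite eirr.
move=> a b ha hb.
case: (toN a ha) => na [naQ nau hca]; case: (toN b hb) => nb [nbQ' nbu hcb].
apply: connect_trans hca _; rewrite cs in hcb; apply: connect_trans _ hcb.
case: (eqVneq na nb) => [->|nn]; first exact: connect0.
by apply: connect1; rewrite /ind_rel /= !inE nau nbu hQ.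
Qed.

Lemma noncut_nbr (B : {set T}) x y b : conn [set: T] -> block_graph e -> is_block e B ->
  x \in B -> b \in B -> b != x -> ~~ is_cut_vertex e x -> e x y -> y \in B.
Proof.
move=> hT bg bB xB bB' nbx ncut hxy.
have hc := noncut_conn hT ncut.
have nyx : y != x by apply: contraTneq hxy => ->; rewrite eirr.
have yS : y \in [set~ x] by rewrite !inE.
have bS : b \in [set~ x] by rewrite !inE.
case/connectP: (hc y b yS bS) => p hp hl.
case: (shortenP hp) hl => p' hp' hu _ hl.
set c := x :: y :: p'.
have hall := path_ir_all hp' yS.
have xnot : x \notin y :: p'.
  rewrite inE negb_or eq_sym nyx /=; apply/negP => xp.
  by move/allP: hall => /(_ x xp); rewrite !inE eqxx.
have ebx : e b x by rewrite esym; apply: (bg B bB) => //; rewrite eq_sym.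
have cyc : cycle e c.
  rewrite /c /= hxy /= rcons_path (path_ir_e hp') /=.
  by rewrite -hl ebx.
have hu2 : uniq c by rewrite /c cons_uniq xnot hu.
have hb := cycle_biconn (isT : c != [::]) hu2 cyc.
have := block_absorb bB hb nbx _ _ bB' xB.
have bin : b \in [set z in c] by rewrite inE /c hl in_cons mem_last orbT.
have xin : x \in [set z in c] by rewrite inE /c mem_head.
move=> /(_ bin xin) /subsetP; apply; by rewrite inE /c !inE eqxx orbT.
Qed.
End Graph.


Set Implicit Arguments.
Unset Strict Implicit.
Unset Printing Implicit Defensive.

Section Struct.
Variable T : finType.
Variable e : rel T.
Hypothesis esym : symmetric e.
Hypothesis eirr : irreflexive e.

Lemma deg1P u s : s \in deg1_nbrs e u -> forall x, e s x -> x = u.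
Proof.
rewrite inE => /andP [hus /eqP h1] x hx.
have : #|Nb e s| <= 1 by rewrite h1.
move/card_le1_eqP => h; apply: h; rewrite inE //; by rewrite esym.
Qed.

Lemma deg1I u s : e u s -> (forall x, e s x -> x = u) -> s \in deg1_nbrs e u.
Proof.
move=> hus hx; rewrite inE hus /=.
have -> : Nb e s = [set u].
  apply/setP => x; rewrite !inE; apply/idP/eqP => [/hx //|->]; by rewrite esym.
by rewrite cards1.
Qed.

Lemma cut_in_sub Q : cut_in e Q \subset Q.
Proof. by apply/subsetP => x; rewrite inE => /andP []. Qed.

Lemma case3_struct (Q : {set T}) v u : connected_set e [set: T] -> block_graph e ->
  near_leaf e Q ->
  is_anchor e Q v \/ ((~ exists a, is_anchor e Q a) /\ v \in cut_in e Q) ->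
  ~ (exists Q, leaf_block e Q /\ 3 <= #|Q|) ->
  u \in cut_in e Q -> u != v ->
  (forall y, e u y -> y \notin Q -> forall x, e y x -> x = u) /\
  (exists s, s \in deg1_nbrs e u /\ s \notin Q).
Proof.
move=> hT bg [[bQ _] nlc] hv nbig uc nuv.
have uQ : u \in Q by move: uc; rewrite inE => /andP [].
have ucut : is_cut_vertex e u by move: uc; rewrite inE => /andP [].
have partA : forall y, e u y -> y \notin Q -> forall x, e y x -> x = u.
  move=> y huy yQ.
  have nuy : u != y by apply: contraTneq huy => ->; rewrite eirr.
  have ne2 : [set u; y] != set0 by apply/set0Pn; exists u; rewrite !inE eqxx.
  have cl2 : forall a b, a \in [set u; y] -> b \in [set u; y] -> a != b -> e a b.
    move=> a b; rewrite !inE => /orP [] /eqP -> /orP [] /eqP ->; rewrite ?eqxx //.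
    by rewrite esym.
  case: (block_ext (clique_biconn esym ne2 cl2)) => B [bB sB].
  have uB : u \in B by apply: (subsetP sB); rewrite !inE eqxx.
  have yB : y \in B by apply: (subsetP sB); rewrite !inE eqxx orbT.
  have ucB : u \in cut_in e B by rewrite inE uB ucut.
  have nQB : Q != B by apply: contraNneq yQ => ->.
  have nbr : block_nbrs e Q B.
    split => //; rewrite -setI_eq0; apply/set0Pn; exists u; by rewrite inE uQ uB.
  have c1 : 0 < #|cut_in e B| by rewrite card_gt0; apply/set0Pn; exists u.
  have lB : leaf_block e B.
    case: nlc => [hall|[a ha]]; first exact: hall.
    split => //; apply/eqP; rewrite eqn_leq c1 andbT leqNgt; apply/negP => c2.
    case: hv => [[_ _ hanc]|[hna _]]; last by apply: hna; exists a.
    have := hanc B nbr (conj bB c2) => /setP /(_ u); rewrite !inE uQ uB /=.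
    by move=> h; move: nuv; rewrite -h.
  have B2 : #|B| <= 2.
    by rewrite leqNgt; apply/negP => hB; apply: nbig; exists B; split.
  have BE : B = [set u; y].
    apply/eqP; rewrite eq_sym eqEcard sB cards2 nuy /=; exact: B2.
  have ycut : ~~ is_cut_vertex e y.
    apply/negP => yc.
    have : 1 < #|cut_in e B|.
      apply/card_gt1P; exists u, y; split => //; by rewrite inE yB.
    by case: lB => _ ->.
  move=> x hyx.
  have nuy' : u != y by [].
  have := noncut_nbr esym eirr hT bg bB yB uB nuy ycut hyx.
  rewrite BE !inE => /orP [] /eqP // hxy.
  by rewrite hxy eirr in hyx.
split => //.
case: (cut_outside esym eirr hT (bg Q bQ) uQ ucut) => y [huy yQ].
exists y; split => //; apply: deg1I => //; exact: partA.
Qed.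

Lemma case2_struct (Q : {set T}) : connected_set e [set: T] -> block_graph e ->
  leaf_block e Q -> 3 <= #|Q| ->
  exists x y, [/\ x != y, x \in Q, y \in Q, e x y &
    (forall z, e x z -> z \in Q) /\ (forall z, e y z -> z \in Q)].
Proof.
move=> hT bg [bQ c1] hQ.
have : 1 < #|Q :\: cut_in e Q|.
  rewrite cardsD (setIidPr (cut_in_sub Q)) c1.
  by move: hQ; case: #|Q| => [|[|[|n]]].
case/card_gt1P => x [y [hx hy nxy]].
move: hx hy; rewrite !inE => /andP [xc xQ] /andP [yc yQ].
have xnc : ~~ is_cut_vertex e x by move: xc; rewrite xQ.
have ync : ~~ is_cut_vertex e y by move: yc; rewrite yQ.
exists x, y; split => //; first by apply: (bg Q bQ).
split => z hz.
  by apply: (noncut_nbr esym eirr hT bg bQ xQ yQ _ xnc hz); rewrite eq_sym.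
by apply: (noncut_nbr esym eirr hT bg bQ yQ xQ nxy ync hz).
Qed.
End Struct.


Unset Implicit Arguments.
Unset Strict Implicit.
Unset Printing Implicit Defensive.

Section Main.
Variable T : finType.
Variable e : rel T.
Hypothesis esym : symmetric e.
Hypothesis eirr : irreflexive e.
Variable k : nat.
Variable I : 'I_k.+1 -> T -> R * R.
Hypothesis hv : forall j, validJ (I j).
Hypothesis hs : forall j, soundT e (I j).
Hypothesis hc : forall u v, e u v -> exists j, disjI (I j u) (I j v).

Lemma hsV (V : {set T}) j : sound e V (I j).
Proof. by move=> a b _ _; apply: hs. Qed.

Lemma hcV (V : {set T}) : forall u v, u \in V -> v \in V -> e u v -> exists j, disjI (I j u) (I j v).
Proof. by move=> u v _ _; apply: hc. Qed.

Lemma neq_of_e a b : e a b -> a != b.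
Proof. by apply: contraTneq => ->; rewrite eirr. Qed.

Lemma dropcov (V : {set T}) i : (forall a b, a \in V -> b \in V -> e a b -> ~ disjI (I i a) (I i b)) ->
  cobox_le e V k.
Proof.
move=> h; have hv' : forall j, valid (I j) by move=> j; apply: hv.
exact: (@drop_coord _ e V k I i hv' (fun j => hsV V j) (hcV V) h).
Qed.

Lemma mergecov (V : {set T}) i m F : i != m -> validJ F -> sound e V F ->
  (forall a b, a \in V -> b \in V -> e a b ->
     disjI (I i a) (I i b) \/ disjI (I m a) (I m b) -> disjI (F a) (F b)) ->
  cobox_le e V k.
Proof.
move=> nim vF sF cF; have hv' : forall j, valid (I j) by move=> j; apply: hv.
exact: (@merge_coord _ e V k I i m F hv' (fun j => hsV V j) (hcV V) nim vF sF cF).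
Qed.

Lemma drop2K2 (V : {set T}) x y : e x y ->
  (forall a, a \in V -> [/\ a != x, a != y, ~~ e x a & ~~ e y a]) -> cobox_le e V k.
Proof.
move=> hxy hV; case: (hc x y hxy) => j hj; apply: (dropcov V j) => a b aV bV hab hd.
case: (hV a aV) => ax ay xa ya; case: (hV b bV) => bx byy xb yb.
apply: (no_2K2 (hv j x) (hv j y) (hv j a) (hv j b) hj hd).
- by have := meets (hs j) (_ : _ != _) xa; apply; rewrite eq_sym.
- by have := meets (hs j) (_ : _ != _) xb; apply; rewrite eq_sym.
- by have := meets (hs j) (_ : _ != _) ya; apply; rewrite eq_sym.
- by have := meets (hs j) (_ : _ != _) yb; apply; rewrite eq_sym.
Qed.


Hypothesis bg : block_graph e.

Lemma Ystar (V Q : {set T}) m c l y0 :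
  is_block e Q -> c \in Q -> y0 \in Q :&: V ->
  (forall x, e l x -> x = c) -> disjI (I m c) (I m l) ->
  (forall r, r \in V -> r != c -> e c r -> r \in Q \/ (forall x, e r x -> x = c)) ->
  exists y, y \in Q :&: V /\ forall a b, a \in V -> b \in V -> a != c -> b != c -> e a b ->
     disjI (I m a) (I m b) -> (a \in Q :&: V /\ b \in Q :&: V) \/ a = y \/ b = y.
Proof.
move=> bQ cQ y0K hl hcl H1.
have OE : forall a b, a \in V -> b \in V -> a != c -> b != c -> e a b ->
    disjI (I m a) (I m b) -> a \in Q \/ b \in Q.
  move=> a b aV bV nac nbc hab hd.
  case/orP: (LS esym (hv m) (hs m) hl hcl (neq_of_e _ _ hab) nac nbc hd) => h.
    case: (H1 a aV nac h) => [|ha]; first by left.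
    by move: nbc; rewrite (ha b hab) eqxx.
  case: (H1 b bV nbc h) => [|hb]; first by right.
  by move: nac; rewrite (hb a); [rewrite eqxx|rewrite esym].
have noc : forall a b, a \notin Q -> b \in Q -> b != c -> e a b -> ~~ e c a.
  move=> a b aQ bQ' nbc hab; apply/negP => hca; move/negP: aQ; apply.
  apply: (two_nbrs esym bg bQ (_ : c != b) cQ bQ') => //; first by rewrite eq_sym.
  by rewrite esym.
pose OEd a b := [/\ a \in V, b \in V, a != c, b != c & [/\ e a b, disjI (I m a) (I m b), a \notin Q & b \in Q]].
have uq : forall a1 b1 a2 b2, OEd a1 b1 -> OEd a2 b2 -> b1 = b2.
  move=> a1 b1 a2 b2 [a1V b1V na1 nb1 [h1 d1 a1Q b1Q]] [a2V b2V na2 nb2 [h2 d2 a2Q b2Q]].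
  apply: NNPP => /eqP nb.
  have n12 : a1 != b2 by apply: contraNneq a1Q => ->.
  have n21 : a2 != b1 by apply: contraNneq a2Q => ->.
  have m12 : ~~ e a1 b2.
    apply/negP => h; move/negP: a1Q; apply; exact: (two_nbrs esym bg bQ nb b1Q b2Q h1 h).
  have m21 : ~~ e a2 b1.
    apply/negP => h; move/negP: a2Q; apply.
    by apply: (two_nbrs esym bg bQ nb b1Q b2Q h h2).
  exact: (LO esym (hv m) (hs m) hl hcl na1 nb1 na2 nb2 (neq_of_e _ _ h1) (neq_of_e _ _ h2) d1 d2
            (noc _ _ a1Q b1Q nb1 h1) (noc _ _ a2Q b2Q nb2 h2) n12 n21 m12 m21).
have orient : forall a b, a \in V -> b \in V -> a != c -> b != c -> e a b -> disjI (I m a) (I m b) ->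
    (a \in Q /\ b \in Q) \/ OEd a b \/ OEd b a.
  move=> a b aV bV nac nbc hab hd.
  case: (boolP (a \in Q)) => aQ; case: (boolP (b \in Q)) => bQ'.
  - by left.
  - by right; right; split => //; split => //; [rewrite esym|apply: disjI_sym].
  - by right; left; split.
  - by case: (OE a b aV bV nac nbc hab hd) => h; [rewrite h in aQ|rewrite h in bQ'].
case: (classic (exists a0 b0, OEd a0 b0)) => [[a0 [b0 h0]]|nex].
  exists b0; split.
    by case: h0 => _ b0V _ _ [_ _ _ b0Q]; rewrite inE b0Q b0V.
  move=> a b aV bV nac nbc hab hd.
  case: (orient a b aV bV nac nbc hab hd) => [[aQ bQ']|[ho|ho]].
  - by left; rewrite !inE aQ bQ' aV bV.
  - by right; right; apply: uq ho h0.
  - by right; left; apply: uq ho h0.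
exists y0; split => // a b aV bV nac nbc hab hd.
case: (orient a b aV bV nac nbc hab hd) => [[aQ bQ']|[ho|ho]].
- by left; rewrite !inE aQ bQ' aV bV.
- by exfalso; apply: nex; exists a, b.
- by exfalso; apply: nex; exists b, a.
Qed.

Hypothesis hT : connected_set e [set: T].

Lemma case2 (Q : {set T}) : leaf_block e Q -> 3 <= #|Q| -> cobox_le e (~: Q) k.
Proof.
move=> lQ hQ.
case: (case2_struct esym eirr hT bg lQ hQ) => x [y [nxy xQ yQ hxy [nx ny]]].
apply: (drop2K2 _ x y hxy) => a; rewrite inE => aQ; split.
- by apply: contraNneq aQ => ->.
- by apply: contraNneq aQ => ->.
- by apply/negP => /nx; apply/negP.
- by apply/negP => /ny; apply/negP.
Qed.

Lemma deg1_e u s : s \in deg1_nbrs e u -> e u s.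
Proof. by rewrite inE => /andP []. Qed.

Lemma case3a (Q : {set T}) v u : near_leaf e Q ->
  is_anchor e Q v \/ ((~ exists a, is_anchor e Q a) /\ v \in cut_in e Q) ->
  ~ (exists Q, leaf_block e Q /\ 3 <= #|Q|) ->
  u \in cut_in e Q -> u != v -> cobox_le e (~: bigant e Q u u) k.
Proof.
move=> nl hv' nbig uc nuv.
case: (case3_struct esym eirr hT bg nl hv' nbig uc nuv) => _ [s [sd sQ]].
have hls := deg1P esym sd; have hus := deg1_e _ _ sd.
have uQ : u \in Q by move: uc; rewrite inE => /andP [].
apply: (drop2K2 _ u s hus) => a; rewrite !inE !negb_or => /andP [/andP [aQ aN] _]; split.
- by apply: contraNneq aQ => ->.
- by apply: contraNneq aN => ->.
- exact: aN.
- by apply/negP => /hls au; move: aQ; rewrite au uQ.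
Qed.

Lemma v_in (Q : {set T}) v :
  is_anchor e Q v \/ ((~ exists a, is_anchor e Q a) /\ v \in cut_in e Q) -> v \in Q.
Proof. by case=> [[h _ _]|[_ h]]; move: h; rewrite inE => /andP []. Qed.

Lemma case3b3 (Q : {set T}) v u w : near_leaf e Q ->
  is_anchor e Q v \/ ((~ exists a, is_anchor e Q a) /\ v \in cut_in e Q) ->
  ~ (exists Q, leaf_block e Q /\ 3 <= #|Q|) ->
  u \in cut_in e Q :\ v -> w \in cut_in e Q :\ v -> u != w ->
  cobox_le e (~: (bigant e Q u w :\ v)) k.
Proof.
move=> nl hv' nbig /setD1P [nuv uc] /setD1P [nwv wc] nuw.
have vQ := v_in Q v hv'.
case: (case3_struct esym eirr hT bg nl hv' nbig uc nuv) => _ [s [sd sQ]].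
case: (case3_struct esym eirr hT bg nl hv' nbig wc nwv) => _ [t [td tQ]].
have hls := deg1P esym sd; have hus := deg1_e _ _ sd.
have hlt := deg1P esym td; have hwt := deg1_e _ _ td.
have uQ : u \in Q by move: uc; rewrite inE => /andP [].
have wQ : w \in Q by move: wc; rewrite inE => /andP [].
set V := ~: (bigant e Q u w :\ v).
have NU : forall a, a \in V -> e u a -> a = v.
  move=> a; rewrite /V !inE => h hua; apply/eqP; move: h; rewrite hua !orbT.
  by case: (a == v).
have NW : forall a, a \in V -> e w a -> a = v.
  move=> a; rewrite /V !inE => h hua; apply/eqP; move: h; rewrite hua !orbT.
  by case: (a == v).
have snv : s != v by apply: contraNneq sQ => ->.
have tnv : t != v by apply: contraNneq tQ => ->.
have inR : forall a, a \in V -> [/\ a != u, a != s, a != w & a != t].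
  move=> a; rewrite /V !inE => h; split; apply/eqP => ha; move: h; rewrite ha.
  - by rewrite nuv uQ.
  - by rewrite hus snv !orbT.
  - by rewrite nwv wQ.
  - by rewrite hwt tnv !orbT.
have tu : t != u by apply: contraNneq tQ => ->.
have ws : w != s by apply: contraTneq wQ => ->.
case: (hc u s hus) => i hi; case: (hc w t hwt) => j hj.
case: (eqVneq i j) => [ij|nij].
  apply: (dropcov V i) => a b aV bV hab hd.
  case: (inR a aV) => a1 a2 a3 a4; case: (inR b bV) => b1 b2 b3 b4.
  rewrite -ij in hj.
  case/orP: (LR2A esym (hv i) (hs i) hls hlt nuw hi hj tu ws a1 a2 a3 a4 b1 b2 b3 b4 (neq_of_e _ _ hab) hd)
    => /andP [h1 h2].
    by move: hab; rewrite (NU b bV h1) (NW a aV h2) eirr.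
  by move: hab; rewrite (NU a aV h1) (NW b bV h2) eirr.
have hK : forall x y, x \in [set v] -> y \in [set v] -> x != y -> e x y.
  by move=> x y; rewrite !inE => /eqP -> /eqP ->; rewrite eqxx.
have vK : v \in [set v] by rewrite inE.
case: (@Fcoord _ _ esym eirr V [set v] v v hK vK vK (fun _ _ _ _ _ => erefl v)) => F [vF sF cF].
apply: (mergecov V i j F nij vF sF) => a b aV bV hab hd.
case: (inR a aV) => a1 a2 a3 a4; case: (inR b bV) => b1 b2 b3 b4.
have nab := neq_of_e _ _ hab.
apply: cF => //; right.
case: hd => hd.
  case/orP: (LS esym (hv i) (hs i) hls hi nab a1 b1 hd) => h.
    by left; apply: NU.
  by right; left; apply: NU.
case/orP: (LS esym (hv j) (hs j) hlt hj nab a3 b3 hd) => h.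
  by left; apply: NW.
by right; left; apply: NW.
Qed.


Lemma case3b4 (Q : {set T}) v u w : near_leaf e Q ->
  is_anchor e Q v \/ ((~ exists a, is_anchor e Q a) /\ v \in cut_in e Q) ->
  ~ (exists Q, leaf_block e Q /\ 3 <= #|Q|) ->
  u \in cut_in e Q :\ v -> w \in cut_in e Q :\ v -> u != w -> 3 < #|cut_in e Q| ->
  cobox_le e (~: (deg1_nbrs e u :|: deg1_nbrs e w :|: [set u; w])) k.
Proof.
move=> nl hv' nbig /setD1P [nuv uc] /setD1P [nwv wc] nuw c4.
have vQ := v_in Q v hv'.
have bQ : is_block e Q by case: nl => [[]].
have Qcl := bg Q bQ.
have Q4 : 3 < #|Q| by apply: leq_trans c4 (subset_leq_card (cut_in_sub e Q)).
case: (case3_struct esym eirr hT bg nl hv' nbig uc nuv) => Au [s [sd sQ]].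
case: (case3_struct esym eirr hT bg nl hv' nbig wc nwv) => Aw [t [td tQ]].
have hls := deg1P esym sd; have hus := deg1_e _ _ sd.
have hlt := deg1P esym td; have hwt := deg1_e _ _ td.
have uQ : u \in Q by move: uc; rewrite inE => /andP [].
have wQ : w \in Q by move: wc; rewrite inE => /andP [].
have d1Q : forall c r, r \in deg1_nbrs e c -> r \notin Q.
  move=> c r rd; apply/negP => rQ; have hlr := deg1P esym rd.
  have : ~~ (Q \subset [set r; c]).
    apply/negP => /subset_leq_card; rewrite cards2; move: Q4.
    by case: (r != c); case: #|Q| => [|[|[|[|n]]]].
  case/subsetPn => q qQ; rewrite !inE negb_or => /andP [nqr nqc].
  have nrq : r != q by rewrite eq_sym.
  by have hq := hlr q (Qcl r q rQ qQ nrq); rewrite hq eqxx in nqc.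
set V := ~: (deg1_nbrs e u :|: deg1_nbrs e w :|: [set u; w]).
have inV : forall a, a \in V = [&& a \notin deg1_nbrs e u, a \notin deg1_nbrs e w, a != u & a != w].
  by move=> a; rewrite /V !inE !negb_or -!andbA.
have NU : forall r, r \in V -> e u r -> r \in Q.
  move=> r; rewrite inV => /and4P [r1 _ _ _] hur; apply: contraT => rQ.
  have : r \in deg1_nbrs e u by apply: deg1I => //; apply: Au.
  by rewrite (negbTE r1).
have NW : forall r, r \in V -> e w r -> r \in Q.
  move=> r; rewrite inV => /and4P [_ r1 _ _] hur; apply: contraT => rQ.
  have : r \in deg1_nbrs e w by apply: deg1I => //; apply: Aw.
  by rewrite (negbTE r1).
have [z zc zn] : exists2 z, z \in cut_in e Q & z \notin [set v; u; w].
  apply/subsetPn; apply/negP => /subset_leq_card; move: c4.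
  have : #|[set v; u; w]| <= 3.
    have -> : [set v; u; w] = [set x in [:: v; u; w]].
      by apply/setP => x; rewrite !inE -orbA.
    by rewrite cardsE; apply: card_size.
  by move=> h1 h2 h3; have := leq_trans h3 h1; rewrite leqNgt h2.
move: zn; rewrite !inE !negb_or => /andP [/andP [nzv nzu] nzw].
have zQ : z \in Q by move: zc; rewrite inE => /andP [].
case: (case3_struct esym eirr hT bg nl hv' nbig zc nzv) => Az [sz [szd szQ]].
have hlsz := deg1P esym szd; have hzsz := deg1_e _ _ szd.
set K := Q :&: V.
have Kcl : forall x y, x \in K -> y \in K -> x != y -> e x y.
  move=> x y; rewrite !inE => /andP [xQ _] /andP [yQ _]; exact: Qcl.
have QV : forall x, x \in Q -> x != u -> x != w -> x \in V.
  move=> x xQ nxu nxw; rewrite inV nxu nxw !andbT.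
  by apply/andP; split; apply/negP => /d1Q; rewrite xQ.
have vK : v \in K by rewrite inE vQ QV // eq_sym.
have zK : z \in K by rewrite inE zQ QV.
have inR : forall a, a \in V -> [/\ a != u, a != s, a != w & a != t].
  move=> a; rewrite inV => /and4P [h1 h2 h3 h4]; split => //.
    by apply: contraNneq h1 => ->.
  by apply: contraNneq h2 => ->.
have tu : t != u by apply: contraNneq (d1Q _ _ td) => ->.
have ws : w != s by apply: contraTneq wQ => ->; apply: d1Q sd.
have nocom : forall ya yb, ya \in K -> yb \in K ->
    forall x, x \in V -> x \notin K -> e x ya -> e x yb -> ya = yb.
  move=> ya yb yaK ybK x xV xK ha hb; apply: NNPP => /eqP nab.
  have xQ : x \notin Q by apply: contraNN xK => xQ; rewrite /K inE xQ xV.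
  have yaQ : ya \in Q by move: yaK; rewrite /K inE => /andP [].
  have ybQ : yb \in Q by move: ybK; rewrite /K inE => /andP [].
  by move/negP: xQ; apply; exact: (two_nbrs esym bg bQ nab yaQ ybQ ha hb).
case: (hc u s hus) => i hi; case: (hc w t hwt) => j hj.
case: (eqVneq i j) => [ij|nij].
  rewrite -ij in hj.
  case: (hc z sz hzsz) => m hm.
  have nim : i != m.
    apply/eqP => im; rewrite -im in hm; move: hm.
    have zs : z != s by apply: contraTneq zQ => ->; apply: d1Q sd.
    have zt : z != t by apply: contraTneq zQ => ->; apply: d1Q td.
    have szu : sz != u by apply: contraNneq (d1Q _ _ szd) => ->.
    have szw : sz != w by apply: contraNneq (d1Q _ _ szd) => ->.
    have eszu : ~~ e sz u by apply/negP => /hlsz h; rewrite h eqxx in nzu.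
    have eszw : ~~ e sz w by apply/negP => /hlsz h; rewrite h eqxx in nzw.
    exact: (LR2B (hv i) (hs i) hls hlt nuw hi hj tu ws nzu zs nzw zt szu szw eszu eszw).
  have H1 : forall r, r \in V -> r != z -> e z r -> r \in Q \/ (forall x, e r x -> x = z).
    move=> r rV nrz hzr; case: (boolP (r \in Q)) => rQ; [by left|right; exact: Az].
  case: (Ystar V Q m z sz v bQ zQ vK hlsz hm H1) => ym [ymK hym].
  case: (@Fcoord _ _ esym eirr V K z ym Kcl zK ymK (nocom z ym zK ymK)) => F [vF sF cF].
  apply: (mergecov V i m F nim vF sF) => a b aV bV hab hd.
  have nab := neq_of_e _ _ hab.
  apply: cF => //; case: hd => hd.
    case: (inR a aV) => a1 a2 a3 a4; case: (inR b bV) => b1 b2 b3 b4.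
    left; rewrite /K !in_setI aV bV !andbT.
    case/orP: (LR2A esym (hv i) (hs i) hls hlt nuw hi hj tu ws a1 a2 a3 a4 b1 b2 b3 b4 nab hd)
      => /andP [h1 h2].
      by rewrite (NU b bV h1) (NW a aV h2).
    by rewrite (NU a aV h1) (NW b bV h2).
  case: (eqVneq a z) => [az|naz]; first by right; left.
  case: (eqVneq b z) => [bz|nbz]; first by right; right; left.
  case: (hym a b aV bV naz nbz hab hd) => [h|[h|h]].
  - by left.
  - by right; right; right; left.
  - by right; right; right; right.
have H1u : forall r, r \in V -> r != u -> e u r -> r \in Q \/ (forall x, e r x -> x = u).
  by move=> r rV _ hur; left; apply: NU.
have H1w : forall r, r \in V -> r != w -> e w r -> r \in Q \/ (forall x, e r x -> x = w).
  by move=> r rV _ hur; left; apply: NW.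
case: (Ystar V Q i u s v bQ uQ vK hls hi H1u) => yi [yiK hyi].
case: (Ystar V Q j w t v bQ wQ vK hlt hj H1w) => yj [yjK hyj].
case: (@Fcoord _ _ esym eirr V K yi yj Kcl yiK yjK (nocom yi yj yiK yjK)) => F [vF sF cF].
apply: (mergecov V i j F nij vF sF) => a b aV bV hab hd.
case: (inR a aV) => a1 a2 a3 a4; case: (inR b bV) => b1 b2 b3 b4.
apply: cF => //; case: hd => hd.
  case: (hyi a b aV bV a1 b1 hab hd) => [h|[h|h]].
  - by left.
  - by right; left.
  - by right; right; left.
case: (hyj a b aV bV a3 b3 hab hd) => [h|[h|h]].
- by left.
- by right; right; right; left.
- by right; right; right; right.
Qed.
End Main.


Theorem lemma12 (T : finType) (e : rel T) (Rs : {set T}) :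
  symmetric e -> irreflexive e ->
  connected_set e [set: T] ->
  (exists x y : T, e x y) ->
  block_graph e ->
  R_choice e Rs ->
  cobox e (~: Rs) <= cobox e [set: T] - 1.
Proof.
move=> esym eirr hT [x0 [y0 hxy0]] bg hR.
have hspec := cobox_spec (cobox_ex esym eirr [set: T]).
move: hspec; case: (cobox e [set: T]) => [|k] hspec.
  exfalso; case: hspec => I [_ _ hc].
  by case: (hc x0 y0 (in_setT _) (in_setT _) hxy0) => [[]].
rewrite subn1 /=; apply: cobox_min.
case: hspec => I [hv hs hc].
have hv' : forall j, validJ (I j) by move=> j; apply: hv.
have hs' : forall j, soundT e (I j) by move=> j a b nab hd; apply: (hs j a b (in_setT a) (in_setT b) nab hd).
have hc' : forall u v, e u v -> exists j, disjI (I j u) (I j v).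
  by move=> u v; apply: hc; apply: in_setT.
case: hR => [[_ ->]|[[_ [Q [lQ hQ ->]]]|[_ [nbig [Q [v [nl hv1 hcase]]]]]]].
- rewrite setCT; exact: cobox_le_set0.
- exact: (case2 T e esym eirr k I hv' hs' hc' bg hT Q lQ hQ).
- case: hcase => [[_ [u [uc nuv ->]]]|[n2 [u [w [uc wc nuw ->]]]]].
    exact: (case3a T e esym eirr k I hv' hs' hc' bg hT Q v u nl hv1 nbig uc nuv).
  case: ifP => h3.
    exact: (case3b3 T e esym eirr k I hv' hs' hc' bg hT Q v u w nl hv1 nbig uc wc nuw).
  apply: (case3b4 T e esym eirr k I hv' hs' hc' bg hT Q v u w nl hv1 nbig uc wc nuw).
  case: nl => [[_ c2] _]; move/eqP: h3 => h3.
  by move: c2 n2 h3; case: #|cut_in e Q| => [|[|[|[|n]]]].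
Qed.
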